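(* Let $p\in\mathbb{Z}[X]$ be a non-constant polynomial with nonnegative coefficients, and let $n_k=p(k)$ for $k\ge0$. Then $(n_k)_{k\ge0}$ is not a rigidity sequence: there is no continuous Borel probability measure $\sigma$ on $\mathbb{T}$ with $\hat\sigma(n_k)\to1$.
   Context: $\hat\sigma(n)=\int_{\mathbb{T}}\lambda^n\,d\sigma(\lambda)$; continuous means atomless. A strictly increasing sequence $(n_k)$ of positive integers is a rigidity sequence if there exist a probability space and a measure-preserving transformation $\varphi$ that is weakly mixing and rigid with respect to $(n_k)$ (i.e. $\mu(\varphi^{-n_k}(A)\triangle A)\to0$ for all measurable $A$); equivalently, if there exists a continuous probability measure $\sigma$ on $\mathbb{T}$ with $\hat\sigma(n_k)\to1$. *)

(* Defs.v *)
(* T is identified with [0,1) via x |-> exp(2 pi i x) (a Borel isomorphism). *)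
From Stdlib Require Import Reals List.
Open Scope R_scope.

Inductive borel : (R -> Prop) -> Prop :=
| borel_interval (a b : R) : borel (fun x => a < x < b)
| borel_compl (A : R -> Prop) : borel A -> borel (fun x => ~ A x)
| borel_union (A : nat -> R -> Prop) :
    (forall n, borel (A n)) -> borel (fun x => exists n, A n x)
| borel_ext (A B : R -> Prop) : (forall x, A x <-> B x) -> borel A -> borel B.

(* A Borel probability measure on T = [0,1) (values on non-Borel sets are irrelevant). *)
Definition is_prob_measure_T (mu : (R -> Prop) -> R) : Prop :=
  (forall A, borel A -> 0 <= mu A) /\
  (forall A : nat -> R -> Prop,
      (forall n, borel (A n)) ->
      (forall m n x, m <> n -> A m x -> A n x -> False) ->
      infinite_sum (fun n => mu (A n)) (mu (fun x => exists n, A n x))) /\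
  mu (fun x => 0 <= x < 1) = 1 /\
  mu (fun x => ~ (0 <= x < 1)) = 0.

(* continuous = atomless *)
Definition atomless (mu : (R -> Prop) -> R) : Prop :=
  forall x : R, mu (fun y => y = x) = 0.

(* Integral over T of a continuous f w.r.t. mu, as limit of Riemann-Stieltjes
   sums over the uniform partitions [j/(N+1), (j+1)/(N+1)), j = 0..N. *)
Definition rs_sum (mu : (R -> Prop) -> R) (f : R -> R) (N : nat) : R :=
  sum_f_R0 (fun j => f (INR j / INR (S N)) *
     mu (fun x => INR j / INR (S N) <= x < INR (S j) / INR (S N))) N.

Definition integral_T (mu : (R -> Prop) -> R) (f : R -> R) (l : R) : Prop :=
  Un_cv (rs_sum mu f) l.

(* hat sigma(n) = re + i im, where lambda = exp(2 pi i x). *)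
Definition fourier_coeff (mu : (R -> Prop) -> R) (n : nat) (re im : R) : Prop :=
  integral_T mu (fun x => cos (2 * PI * INR n * x)) re /\
  integral_T mu (fun x => sin (2 * PI * INR n * x)) im.

(* Polynomials with nonnegative integer coefficients: coefficient list, lowest degree first. *)
Definition peval (cs : list nat) (k : nat) : nat :=
  fold_right (fun c acc => (c + k * acc)%nat) 0%nat cs.

Definition nonconstant (cs : list nat) : Prop :=
  exists i, (1 <= i)%nat /\ nth i cs 0%nat <> 0%nat.

(* Main.v *)
Require Import Defs.
From Stdlib Require Import Reals ZArith List Lra Lia Classical FunctionalExtensionality PropExtensionality.
Open Scope R_scope.

Lemma set_ext (A B : R -> Prop) : (forall x, A x <-> B x) -> A = B.
Proof. intros H; apply functional_extensionality; intro x; apply propositional_extensionality; apply H. Qed.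

Lemma nat_unbounded (r : R) : exists n : nat, r < INR n.
Proof.
  destruct (archimed r) as [H1 H2].
  destruct (Z_lt_le_dec 0 (up r)) as [Hp|Hn].
  - exists (Z.to_nat (up r)). rewrite INR_IZR_INZ, Z2Nat.id by lia. lra.
  - exists 0%nat. simpl. apply IZR_le in Hn. lra.
Qed.

Lemma floor_nat (x : R) : 0 <= x -> exists j : nat, INR j <= x < INR j + 1.
Proof.
  intros Hx. destruct (base_Int_part x) as [H1 H2].
  assert (Hz : (0 <= Int_part x)%Z).
  { destruct (Z_lt_le_dec (Int_part x) 0) as [Hl|Hl]; [|exact Hl].
    exfalso. assert (Int_part x <= -1)%Z by lia. apply IZR_le in H. lra. }
  exists (Z.to_nat (Int_part x)). rewrite INR_IZR_INZ, Z2Nat.id by lia. lra.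
Qed.

Lemma borel_empty : borel (fun _ => False).
Proof. apply (borel_ext (fun x => 0 < x < 0)); [intros x; split; [lra|tauto]|apply borel_interval]. Qed.

Lemma borel_full : borel (fun _ => True).
Proof. apply (borel_ext (fun x => ~ False)); [tauto|apply borel_compl, borel_empty]. Qed.

Lemma borel_or (A B : R -> Prop) : borel A -> borel B -> borel (fun x => A x \/ B x).
Proof.
  intros HA HB.
  apply (borel_ext (fun x => exists n, (match n with O => A | _ => B end) x)).
  - intros x; split.
    + intros [[|n] H]; auto.
    + intros [H|H]; [exists O|exists 1%nat]; auto.
  - apply borel_union. intros [|n]; auto.
Qed.

Lemma borel_and (A B : R -> Prop) : borel A -> borel B -> borel (fun x => A x /\ B x).
Proof.
  intros HA HB. apply (borel_ext (fun x => ~ (~ A x \/ ~ B x))).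
  - intros x; tauto.
  - apply borel_compl, borel_or; apply borel_compl; auto.
Qed.

Lemma borel_prop (P : Prop) (A : R -> Prop) : borel A -> borel (fun x => P /\ A x).
Proof.
  intros HA. destruct (classic P) as [Hp|Hp].
  - apply (borel_ext A); [tauto|auto].
  - apply (borel_ext (fun _ => False)); [tauto|apply borel_empty].
Qed.

Lemma borel_lt (b : R) : borel (fun x => x < b).
Proof.
  apply (borel_ext (fun x => exists n : nat, b - INR n - 1 < x < b)).
  - intros x; split.
    + intros [n Hn]; lra.
    + intros H. destruct (nat_unbounded (b - x)) as [n Hn]. exists n. lra.
  - apply borel_union. intros n; apply borel_interval.
Qed.

Lemma borel_Ico (a b : R) : borel (fun x => a <= x < b).
Proof.
  apply (borel_ext (fun x => ~ (x < a) /\ x < b)).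
  - intros x; split; intros; lra.
  - apply borel_and; [apply borel_compl|]; apply borel_lt.
Qed.

Lemma borel_point (a : R) : borel (fun x => x = a).
Proof.
  apply (borel_ext (fun x => ~ (x < a) /\ ~ (~ (x < a + 1) \/ (a < x < a + 1)))).
  - intros x; split; intros; lra.
  - apply borel_and; [apply borel_compl, borel_lt|].
    apply borel_compl, borel_or; [apply borel_compl, borel_lt|apply borel_interval].
Qed.

Lemma sum_const_cv (e : R) : infinite_sum (fun _ => e) e -> e = 0.
Proof.
  intros H. destruct (Req_dec e 0) as [|He]; auto. exfalso.
  destruct (H (Rabs e)) as [N HN]. { apply Rabs_pos_lt; auto. }
  specialize (HN (S N) ltac:(lia)).
  assert (Hs : forall n, sum_f_R0 (fun _ => e) n = INR (S n) * e).
  { induction n; simpl sum_f_R0. simpl; lra. rewrite IHn. rewrite (S_INR (S n)). ring. }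
  rewrite Hs in HN. unfold Rdist in HN.
  replace (INR (S (S N)) * e - e) with (INR (S N) * e) in HN by (rewrite (S_INR (S N)); ring).
  rewrite Rabs_mult, Rabs_right in HN by (apply Rle_ge, pos_INR).
  assert (1 <= INR (S N)) by (rewrite S_INR; pose proof (pos_INR N); lra).
  pose proof (Rabs_pos e). nra.
Qed.

Lemma mu_empty mu : is_prob_measure_T mu -> mu (fun _ => False) = 0.
Proof.
  intros [_ [Hadd _]].
  specialize (Hadd (fun _ _ => False) (fun _ => borel_empty) ltac:(tauto)).
  cbv beta in Hadd.
  assert (E : (fun x : R => exists _ : nat, False) = (fun _ : R => False)).
  { apply set_ext. intros x; split; [intros [_ H]; auto|tauto]. }
  rewrite E in Hadd. apply sum_const_cv; exact Hadd.
Qed.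

Lemma infsum_eventually_zero (f : nat -> R) (N : nat) (l : R) :
  (forall n, (n > N)%nat -> f n = 0) -> infinite_sum f l -> l = sum_f_R0 f N.
Proof.
  intros Hz Hs.
  assert (Hc : forall n, (n >= N)%nat -> sum_f_R0 f n = sum_f_R0 f N).
  { intros n Hn. induction Hn; auto. simpl. rewrite IHHn, Hz by lia. ring. }
  destruct (Req_dec l (sum_f_R0 f N)) as [|Hne]; auto. exfalso.
  destruct (Hs (Rabs (sum_f_R0 f N - l))) as [M HM].
  { apply Rabs_pos_lt. lra. }
  specialize (HM (max M N) ltac:(lia)). rewrite Hc in HM by lia.
  unfold Rdist in HM. lra.
Qed.

Lemma mu_finite_add mu (Hmu : is_prob_measure_T mu) (A : nat -> R -> Prop) (N : nat) :
  (forall j, borel (A j)) ->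
  (forall i j x, i <> j -> (i <= N)%nat -> (j <= N)%nat -> A i x -> A j x -> False) ->
  mu (fun x => exists j, (j <= N)%nat /\ A j x) = sum_f_R0 (fun j => mu (A j)) N.
Proof.
  intros HB HD. pose proof Hmu as [Hpos [Hadd _]].
  specialize (Hadd (fun j x => (j <= N)%nat /\ A j x)).
  cbv beta in Hadd.
  specialize (Hadd (fun j => borel_prop _ _ (HB j))).
  specialize (Hadd ltac:(intros m n x Hmn [Hm Am] [Hn An]; eapply HD; eauto)).
  assert (Hz : forall n, (n > N)%nat -> mu (fun x => (n <= N)%nat /\ A n x) = 0).
  { intros n Hn.
    replace (fun x => (n <= N)%nat /\ A n x) with (fun _ : R => False).
    + apply mu_empty; auto.
    + apply set_ext. intros x; split; [tauto|]. intros [H _]; lia. }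
  rewrite (infsum_eventually_zero _ N _ Hz Hadd).
  apply sum_eq. intros i Hi. f_equal. apply set_ext. intros x; tauto.
Qed.

Lemma mu_nonneg mu (Hmu : is_prob_measure_T mu) A : borel A -> 0 <= mu A.
Proof. destruct Hmu as [H _]; auto. Qed.

Lemma mu_mono mu (Hmu : is_prob_measure_T mu) (A B : R -> Prop) :
  borel A -> borel B -> (forall x, A x -> B x) -> mu A <= mu B.
Proof.
  intros HA HB Hs.
  pose (F := fun j => match j with O => A | _ => (fun x => B x /\ ~ A x) end).
  assert (HF : forall j, borel (F j)).
  { intros [|j]; simpl; auto. apply borel_and; auto. apply borel_compl; auto. }
  pose proof (mu_finite_add mu Hmu F 1 HF) as E.
  assert (E2 : (fun x => exists j, (j <= 1)%nat /\ F j x) = B).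
  { apply set_ext. intros x; split.
    - intros [[|[|j]] [Hj Hx]]; simpl in Hx; try lia; auto. tauto.
    - intros Hx. destruct (classic (A x)).
      + exists O; simpl; split; auto.
      + exists 1%nat; simpl; split; auto. }
  rewrite E2 in E. rewrite E.
  - simpl. pose proof (mu_nonneg mu Hmu (F 1%nat) (HF 1%nat)) as Hn. simpl in Hn. lra.
  - intros [|[|i]] [|[|j]] x Hij Hi Hj; simpl; try lia; tauto.
Qed.

Lemma mu_null_union mu (Hmu : is_prob_measure_T mu) (Z : nat -> R -> Prop) :
  (forall n, borel (Z n)) -> (forall n, mu (Z n) = 0) -> mu (fun x => exists n, Z n x) = 0.
Proof.
  intros HB H0.
  pose (Z' := fun n x => Z n x /\ ~ (exists i, (i < n)%nat /\ Z i x)).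
  assert (HB' : forall n, borel (Z' n)).
  { intros n. apply borel_and; auto. apply borel_compl, borel_union.
    intros i. apply borel_prop; auto. }
  assert (E : (fun x => exists n, Z n x) = (fun x => exists n, Z' n x)).
  { apply set_ext. intros x; split.
    - intros [n Hn]. revert Hn. induction n as [n IH] using lt_wf_ind. intros Hn.
      destruct (classic (exists i, (i < n)%nat /\ Z i x)) as [[i [Hi Zi]]|Hno].
      + apply (IH i Hi Zi).
      + exists n. split; auto.
    - intros [n [Hn _]]; eauto. }
  rewrite E. pose proof Hmu as [Hpos [Hadd Hrest]].
  specialize (Hadd Z' HB').
  assert (Hz : forall n, mu (Z' n) = 0).
  { intros n. apply Rle_antisym.
    - rewrite <- (H0 n). apply mu_mono; auto. intros x [Hx _]; auto.
    - apply Hpos; auto. }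
  assert (Hz' : forall n, (n > 0)%nat -> mu (Z' n) = 0) by (intros; apply Hz).
  rewrite (infsum_eventually_zero _ 0 _ Hz').
  - simpl. apply Hz.
  - apply Hadd. intros m n x Hmn [Hm Nm] [Hn Nn].
    destruct (Nat.lt_gt_cases m n) as [[Hlt|Hlt] _]; auto.
    + apply Nn; eauto.
    + apply Nm; eauto.
Qed.
Definition I (N j : nat) : R -> Prop :=
  fun x => INR j / INR (S N) <= x < INR (S j) / INR (S N).

Lemma INR_S_pos N : 0 < INR (S N).
Proof. apply lt_0_INR; lia. Qed.

Lemma div_le_iff a b Q : 0 < Q -> (a / Q <= b <-> a <= b * Q).
Proof.
  intros HQ. split; intros H.
  - replace a with ((a / Q) * Q) by (field; lra). apply Rmult_le_compat_r; lra.
  - replace b with ((b * Q) / Q) by (field; lra). unfold Rdiv.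
    apply Rmult_le_compat_r; [left; apply Rinv_0_lt_compat; lra|lra].
Qed.

Lemma lt_div_iff a b Q : 0 < Q -> (b < a / Q <-> b * Q < a).
Proof.
  intros HQ. split; intros H.
  - replace a with ((a / Q) * Q) by (field; lra). apply Rmult_lt_compat_r; lra.
  - replace b with ((b * Q) / Q) by (field; lra). unfold Rdiv.
    apply Rmult_lt_compat_r; [apply Rinv_0_lt_compat; lra|lra].
Qed.

Lemma le_div_iff a b Q : 0 < Q -> (b <= a / Q <-> b * Q <= a).
Proof.
  intros HQ. split; intros H.
  - replace a with ((a / Q) * Q) by (field; lra). apply Rmult_le_compat_r; lra.
  - replace b with ((b * Q) / Q) by (field; lra). unfold Rdiv.
    apply Rmult_le_compat_r; [left; apply Rinv_0_lt_compat; lra|lra].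
Qed.

Lemma grid_iff N j x : I N j x <-> INR j <= x * INR (S N) < INR j + 1.
Proof.
  unfold I. pose proof (INR_S_pos N).
  rewrite div_le_iff, lt_div_iff, (S_INR j) by lra. tauto.
Qed.

Lemma borel_I N j : borel (I N j).
Proof. apply borel_Ico. Qed.

Lemma grid_disj N i j x : i <> j -> I N i x -> I N j x -> False.
Proof.
  intros Hij Hi Hj. apply grid_iff in Hi. apply grid_iff in Hj.
  destruct (Nat.lt_gt_cases i j) as [[H|H] _]; auto.
  - apply le_INR in H. rewrite S_INR in H. lra.
  - apply le_INR in H. rewrite S_INR in H. lra.
Qed.

Lemma grid_union N : (fun x => exists j, (j <= N)%nat /\ I N j x) = (fun x => 0 <= x < 1).
Proof.
  apply set_ext. intros x. pose proof (INR_S_pos N). split.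
  - intros [j [Hj Hx]]. apply grid_iff in Hx. apply le_INR in Hj.
    rewrite S_INR in Hx. pose proof (pos_INR j). split.
    + destruct (Rle_or_lt 0 x); auto. nra.
    + destruct (Rlt_or_le x 1); auto. nra.
  - intros [H0 H1]. destruct (floor_nat (x * INR (S N))) as [j Hj]. { nra. }
    exists j. split.
    + assert (INR j < INR (S N)) by nra. apply INR_lt in H2. lia.
    + apply grid_iff. auto.
Qed.

Lemma rs_one mu (Hmu : is_prob_measure_T mu) N : rs_sum mu (fun _ => 1) N = 1.
Proof.
  unfold rs_sum.
  rewrite (sum_eq _ (fun j => mu (I N j))) by (intros; unfold I; ring).
  rewrite <- mu_finite_add; auto.
  - rewrite grid_union. destruct Hmu as [_ [_ [H _]]]. auto.
  - apply borel_I.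
  - intros i j x Hij _ _. apply grid_disj; auto.
Qed.

Definition Dn mu (n N : nat) : R := rs_sum mu (fun x => 1 - cos (2 * PI * INR n * x)) N.

Lemma Dn_eq mu N n : Dn mu n N = rs_sum mu (fun _ => 1) N - rs_sum mu (fun x => cos (2 * PI * INR n * x)) N.
Proof.
  unfold Dn, rs_sum. rewrite <- minus_sum. apply sum_eq. intros; ring.
Qed.

Lemma trig_ineq u v : 1 - cos (u - v) <= 2 * (1 - cos u) + 2 * (1 - cos v).
Proof.
  rewrite cos_minus. pose proof (sin2_cos2 u). pose proof (sin2_cos2 v).
  unfold Rsqr in *.
  assert (0 <= (cos u - 1 + (cos v - 1))*(cos u - 1 + (cos v - 1)) + (sin u + sin v)*(sin u + sin v)).
  { pose proof (Rle_0_sqr (cos u - 1 + (cos v - 1))). pose proof (Rle_0_sqr (sin u + sin v)). unfold Rsqr in *. lra. }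
  nra.
Qed.

Lemma Dn_sub mu (Hmu : is_prob_measure_T mu) m n N : (n <= m)%nat ->
  Dn mu (m - n) N <= 2 * Dn mu m N + 2 * Dn mu n N.
Proof.
  intros Hnm. unfold Dn, rs_sum. rewrite !scal_sum, <- plus_sum.
  apply sum_Rle. intros j _.
  pose proof (mu_nonneg mu Hmu _ (borel_I N j)). unfold I in H.
  rewrite minus_INR by auto.
  pose proof (trig_ineq (2 * PI * INR m * (INR j / INR (S N))) (2 * PI * INR n * (INR j / INR (S N)))).
  replace (2 * PI * (INR m - INR n) * (INR j / INR (S N))) with
    (2 * PI * INR m * (INR j / INR (S N)) - 2 * PI * INR n * (INR j / INR (S N))) by ring.
  nra.
Qed.

Lemma Dn_nonneg mu (Hmu : is_prob_measure_T mu) n N : 0 <= Dn mu n N.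
Proof.
  unfold Dn, rs_sum. apply cond_pos_sum. intros j.
  pose proof (mu_nonneg mu Hmu _ (borel_I N j)). unfold I in H.
  pose proof (COS_bound (2 * PI * INR n * (INR j / INR (S N)))). nra.
Qed.

Lemma cos_mono_aux a b : 0 <= a -> a <= b -> b <= PI -> cos b <= cos a.
Proof.
  intros. destruct (Req_dec a b) as [->|Hne]; [lra|].
  left. apply cos_decreasing_1; lra.
Qed.

Lemma cos_bound_K (K m : nat) (t : R) : (2 <= K)%nat ->
  INR m + / INR K <= t <= INR m + 1 - / INR K ->
  cos (2 * PI * t) <= cos (2 * PI / INR K).
Proof.
  intros HK Ht. pose proof PI_RGT_0.
  assert (HK' : 2 <= INR K) by (apply (le_INR 2) in HK; simpl in HK; lra).
  assert (HiK : 0 < / INR K <= / 2).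
  { split. apply Rinv_0_lt_compat; lra. apply Rinv_le_contravar; lra. }
  set (s := t - INR m).
  assert (E : cos (2 * PI * t) = cos (2 * PI * s)).
  { replace (2 * PI * t) with (2 * PI * s + 2 * INR m * PI) by (unfold s; ring).
    apply cos_period. }
  rewrite E. replace (2 * PI / INR K) with (2 * PI * / INR K) by (unfold Rdiv; ring).
  destruct (Rle_or_lt s (1/2)) as [Hs|Hs].
  - apply cos_mono_aux; try nra. unfold s; nra.
  - replace (cos (2 * PI * s)) with (cos (2 * PI * (1 - s))).
    + apply cos_mono_aux; unfold s in *; nra.
    + replace (2 * PI * (1 - s)) with (- (2 * PI * s) + 2 * INR 1 * PI) by (simpl; ring).
      rewrite cos_period, cos_neg. auto.
Qed.

Lemma eta_pos (K : nat) : (2 <= K)%nat -> 0 < 1 - cos (2 * PI / INR K).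
Proof.
  intros HK. pose proof PI_RGT_0.
  assert (HK' : 2 <= INR K) by (apply (le_INR 2) in HK; simpl in HK; lra).
  assert (0 < 2 * PI / INR K <= PI).
  { split. apply Rdiv_lt_0_compat; lra.
    apply div_le_iff; nra. }
  assert (cos (2 * PI / INR K) < cos 0) by (apply cos_decreasing_1; lra).
  rewrite cos_0 in H1. lra.
Qed.

Definition Bset (c K : nat) : R -> Prop :=
  fun x => exists m, (m < c)%nat /\ (INR m + / INR K) / INR c <= x < (INR m + 1 - / INR K) / INR c.

Lemma borel_B c K : borel (Bset c K).
Proof. apply borel_union. intros m. apply borel_prop, borel_Ico. Qed.

Lemma B_key mu (Hmu : is_prob_measure_T mu) (c K L N : nat) :
  (0 < c)%nat -> (2 <= K)%nat -> (1 <= L)%nat -> S N = (c * K * L)%nat ->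
  (1 - cos (2 * PI / INR K)) * mu (Bset c K) <= Dn mu c N.
Proof.
  intros Hc HK HL HN.
  set (eta := 1 - cos (2 * PI / INR K)).
  set (G := fun j x => eta <= 1 - cos (2 * PI * INR c * (INR j / INR (S N))) /\ I N j x).
  assert (HG : forall j, borel (G j)) by (intros; apply borel_prop, borel_I).
  assert (Hpos := INR_S_pos N).
  assert (Hcr : 0 < INR c) by (apply lt_0_INR; lia).
  assert (HKr : 2 <= INR K) by (apply (le_INR 2) in HK; simpl in HK; lra).
  assert (HLr : 1 <= INR L) by (apply (le_INR 1) in HL; simpl in HL; lra).
  assert (HQ : INR (S N) = INR c * INR K * INR L) by (rewrite HN, !mult_INR; auto).
  assert (Hsub : mu (Bset c K) <= mu (fun x => exists j, (j <= N)%nat /\ G j x)).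
  { apply mu_mono; auto. apply borel_B.
    - apply borel_union. intros j. apply borel_prop; auto.
    - intros x [m [Hm [Hx1 Hx2]]].
      apply div_le_iff in Hx1; auto. apply lt_div_iff in Hx2; auto.
      assert (Hm' : INR m + 1 <= INR c) by (apply le_INR in Hm; rewrite S_INR in Hm; lra).
      assert (HiK : 0 < / INR K <= / 2).
      { split. apply Rinv_0_lt_compat; lra. apply Rinv_le_contravar; lra. }
      assert (Hx01 : 0 <= x < 1).
      { pose proof (pos_INR m). split; nra. }
      assert (Hjx' : exists j, (j <= N)%nat /\ I N j x).
      { pose proof (grid_union N) as E. apply (f_equal (fun P => P x)) in E.
        simpl in E. rewrite E. auto. }
      destruct Hjx' as [j [Hj Hjx]].
      exists j. split; auto. split; auto.
      apply grid_iff in Hjx. rewrite HQ in Hjx.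
      assert (Hlow : INR ((m * K + 1) * L) <= INR j).
      { apply le_INR. apply Nat.lt_succ_r. apply INR_lt. rewrite S_INR.
        rewrite mult_INR, plus_INR, mult_INR. simpl.
        assert ((INR m * INR K + 1) * INR L = (INR m + / INR K) * INR c * INR K * INR L / INR c)
          by (field; lra).
        rewrite H.
        assert ((INR m + / INR K) * INR c * INR K * INR L / INR c <= x * (INR c * INR K * INR L)).
        { apply div_le_iff; auto. nra. }
        lra. }
      rewrite mult_INR, plus_INR, mult_INR in Hlow. simpl in Hlow.
      unfold eta.
      replace (2 * PI * INR c * (INR j / INR (S N))) with (2 * PI * (INR j / (INR K * INR L)))
        by (rewrite HQ; field; lra).
      assert (cos (2 * PI * (INR j / (INR K * INR L))) <= cos (2 * PI / INR K)).
      { apply (cos_bound_K K m); auto. split.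
        - apply le_div_iff; [nra|].
          replace ((INR m + / INR K) * (INR K * INR L)) with ((INR m * INR K + 1) * INR L) by (field; lra).
          lra.
        - assert (INR j / (INR K * INR L) <= x * INR c).
          { apply div_le_iff; [nra|]. replace (x * INR c * (INR K * INR L)) with (x * (INR c * INR K * INR L)) by ring. lra. }
          lra. }
      lra. }
  rewrite mu_finite_add in Hsub; auto.
  2:{ intros i j x Hij _ _ [_ Hi] [_ Hj]. eapply grid_disj; eauto. }
  assert (Heta : 0 < eta) by (apply eta_pos; auto).
  apply Rle_trans with (eta * sum_f_R0 (fun j => mu (G j)) N).
  { apply Rmult_le_compat_l; lra. }
  unfold Dn, rs_sum. rewrite scal_sum. apply sum_Rle. intros j _.
  pose proof (mu_nonneg mu Hmu _ (borel_I N j)) as Hn. unfold I in Hn.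
  unfold G. destruct (classic (eta <= 1 - cos (2 * PI * INR c * (INR j / INR (S N))))) as [Hc'|Hc'].
  - replace (fun x => eta <= 1 - cos (2 * PI * INR c * (INR j / INR (S N))) /\ I N j x) with (I N j)
      by (apply set_ext; intros x; tauto).
    unfold I. nra.
  - replace (fun x => eta <= 1 - cos (2 * PI * INR c * (INR j / INR (S N))) /\ I N j x) with (fun _ : R => False)
      by (apply set_ext; intros x; tauto).
    rewrite mu_empty; auto.
    pose proof (COS_bound (2 * PI * INR c * (INR j / INR (S N)))). nra.
Qed.

Definition small mu (n : nat) (eps : R) : Prop :=
  exists N0, forall N, (N >= N0)%nat -> Dn mu n N <= eps.

Lemma B_null mu (Hmu : is_prob_measure_T mu) (c K : nat) :
  (0 < c)%nat -> (2 <= K)%nat -> (forall eps, eps > 0 -> small mu c eps) -> mu (Bset c K) = 0.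
Proof.
  intros Hc HK Hs. apply Rle_antisym; [|apply mu_nonneg; auto; apply borel_B].
  destruct (Rle_or_lt (mu (Bset c K)) 0) as [H|H]; auto. exfalso.
  pose proof (eta_pos K HK) as He.
  set (eta := 1 - cos (2 * PI / INR K)) in *.
  destruct (Hs (eta * mu (Bset c K) / 2)) as [N0 HN0]. { nra. }
  assert (Hq0 : (1 * S N0 <= c * K * S N0)%nat).
  { apply Nat.mul_le_mono_r. nia. }
  simpl in Hq0.
  assert (HSQ : S (c * K * S N0 - 1) = (c * K * S N0)%nat).
  { set (Q := (c * K * S N0)%nat) in *. lia. }
  assert (HQN : (c * K * S N0 - 1 >= N0)%nat).
  { set (Q := (c * K * S N0)%nat) in *. lia. }
  pose proof (B_key mu Hmu c K (S N0) (c * K * S N0 - 1) Hc HK ltac:(lia) HSQ).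
  specialize (HN0 (c * K * S N0 - 1)%nat HQN). fold eta in H0.
  assert (0 < eta * mu (Bset c K)) by (apply Rmult_lt_0_compat; auto). lra.
Qed.

Lemma atom_contra mu (Hmu : is_prob_measure_T mu) (Hat : atomless mu) (c : nat) :
  (0 < c)%nat -> (forall eps, eps > 0 -> small mu c eps) -> False.
Proof.
  intros Hc Hs.
  pose (W := fun n x => (n < c)%nat /\ x = INR n / INR c).
  pose (BB := fun n => Bset c (n + 2)).
  pose (F := fun k => match k with O => (fun x => exists n, W n x) | 1%nat => (fun x => exists n, BB n x) | _ => (fun _ : R => False) end).
  assert (HWb : forall n, borel (W n)) by (intros; apply borel_prop, borel_point).
  assert (HBb : forall n, borel (BB n)) by (intros; apply borel_B).
  assert (HFb : forall k, borel (F k)).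
  { intros [|[|k]]; simpl. apply borel_union; auto. apply borel_union; auto. apply borel_empty. }
  assert (HF0 : forall k, mu (F k) = 0).
  { intros [|[|k]]; simpl.
    - apply mu_null_union; auto. intros n. apply Rle_antisym; [|apply mu_nonneg; auto].
      rewrite <- (Hat (INR n / INR c)). apply mu_mono; auto. apply borel_point.
      intros x [_ Hx]; auto.
    - apply mu_null_union; auto. intros n. apply B_null; auto. lia.
    - apply mu_empty; auto. }
  pose proof (mu_null_union mu Hmu F HFb HF0) as H0.
  assert (Hle : mu (fun x => 0 <= x < 1) <= mu (fun x => exists k, F k x)).
  { apply mu_mono; auto. apply borel_Ico. apply borel_union; auto.
    intros x [Hx0 Hx1].
    assert (Hcr : 0 < INR c) by (apply lt_0_INR; lia).
    destruct (floor_nat (x * INR c)) as [m [Hm1 Hm2]]. { nra. }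
    assert (Hmc : (m < c)%nat).
    { apply INR_lt. nra. }
    destruct (Req_dec (x * INR c) (INR m)) as [Eq|Ne].
    - exists O. simpl. exists m. split; auto. unfold W. field_simplify_eq; lra.
    - set (f := x * INR c - INR m).
      assert (Hf : 0 < f < 1) by (unfold f; lra).
      destruct (nat_unbounded (/ f + / (1 - f))) as [n Hn].
      assert (0 < / f) by (apply Rinv_0_lt_compat; lra).
      assert (0 < / (1 - f)) by (apply Rinv_0_lt_compat; lra).
      assert (HK : INR n < INR (n + 2)) by (apply lt_INR; lia).
      assert (Hi1 : / INR (n + 2) < f).
      { rewrite <- (Rinv_inv f). apply Rinv_lt_contravar; [|lra].
        apply Rmult_lt_0_compat; lra. }
      assert (Hi2 : / INR (n + 2) < 1 - f).
      { rewrite <- (Rinv_inv (1 - f)). apply Rinv_lt_contravar; [|lra].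
        apply Rmult_lt_0_compat; lra. }
      exists 1%nat. simpl. exists n. unfold BB, Bset. exists m. split; auto.
      split.
      + apply div_le_iff; auto. unfold f in Hi1. lra.
      + apply lt_div_iff; auto. unfold f in Hi2. lra. }
  rewrite H0 in Hle. destruct Hmu as [_ [_ [H1 _]]]. lra.
Qed.

Definition good mu (f : nat -> nat) : Prop :=
  forall eps, eps > 0 -> exists K, forall k, (k >= K)%nat -> small mu (f k) eps.

Lemma good_shift mu f : good mu f -> good mu (fun k => f (S k)).
Proof. intros H eps He. destruct (H eps He) as [K HK]. exists K. intros k Hk. apply HK; lia. Qed.

Lemma good_sub mu (Hmu : is_prob_measure_T mu) f g : good mu f -> good mu g ->
  (forall k, (g k <= f k)%nat) -> good mu (fun k => f k - g k)%nat.
Proof.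
  intros Hf Hg Hle eps He.
  destruct (Hf (eps / 4)) as [K1 H1]; [lra|]. destruct (Hg (eps / 4)) as [K2 H2]; [lra|].
  exists (max K1 K2). intros k Hk.
  destruct (H1 k ltac:(lia)) as [N1 HN1]. destruct (H2 k ltac:(lia)) as [N2 HN2].
  exists (max N1 N2). intros N HN.
  pose proof (Dn_sub mu Hmu (f k) (g k) N (Hle k)).
  specialize (HN1 N ltac:(lia)). specialize (HN2 N ltac:(lia)). lra.
Qed.

Fixpoint Qd (d : nat) (f : nat -> nat) : Prop :=
  match d with
  | O => exists c, (0 < c)%nat /\ forall k, f k = c
  | S d' => (forall k, (f k <= f (S k))%nat) /\ Qd d' (fun k => f (S k) - f k)%nat
  end.

Lemma Qd_ext d : forall f g, (forall k, f k = g k) -> Qd d f -> Qd d g.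
Proof.
  induction d as [|d IH]; simpl; intros f g E H.
  - destruct H as [c [Hc Hk]]. exists c. split; auto. intros k. rewrite <- E. auto.
  - destruct H as [Hm HQ]. split.
    + intros k. rewrite <- !E. auto.
    + refine (IH _ _ _ HQ). intros k. cbv beta. rewrite !E. reflexivity.
Qed.

Lemma Qd_good mu (Hmu : is_prob_measure_T mu) d : forall f, Qd d f -> good mu f ->
  exists c, (0 < c)%nat /\ forall eps, eps > 0 -> small mu c eps.
Proof.
  induction d as [|d IH]; simpl; intros f HQ Hg.
  - destruct HQ as [c [Hc Hk]]. exists c. split; auto. intros eps He.
    destruct (Hg eps He) as [K HK]. specialize (HK K (le_n K)). rewrite Hk in HK. auto.
  - destruct HQ as [Hm HQ]. apply (IH _ HQ).
    apply good_sub; auto. apply good_shift; auto.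
Qed.

Lemma Qd_shift d : forall f, Qd d f -> Qd d (fun k => f (S k)).
Proof.
  induction d as [|d IH]; simpl; intros f H.
  - destruct H as [c [Hc Hk]]. exists c; auto.
  - destruct H as [Hm HQ]. split; auto. apply (IH _ HQ).
Qed.

Lemma Qd_add d : forall f g, Qd d f -> Qd d g -> Qd d (fun k => f k + g k)%nat.
Proof.
  induction d as [|d IH]; simpl; intros f g Hf Hg.
  - destruct Hf as [c [Hc Hk]]. destruct Hg as [c' [Hc' Hk']]. exists (c + c')%nat.
    split; [lia|]. intros k. rewrite Hk, Hk'. auto.
  - destruct Hf as [Hm HQ]. destruct Hg as [Hm' HQ']. split.
    + intros k. specialize (Hm k). specialize (Hm' k). lia.
    + refine (Qd_ext _ _ _ _ (IH _ _ HQ HQ')). intros k. cbv beta.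
      specialize (Hm k); specialize (Hm' k); lia.
Qed.

Lemma Qd_addc d c : forall f, Qd d f -> Qd d (fun k => c + f k)%nat.
Proof.
  destruct d as [|d]; simpl; intros f Hf.
  - destruct Hf as [c0 [Hc Hk]]. exists (c + c0)%nat. split; [lia|]. intros k; rewrite Hk; auto.
  - destruct Hf as [Hm HQ]. split.
    + intros k; specialize (Hm k); lia.
    + refine (Qd_ext _ _ _ _ HQ). intros k. cbv beta. lia.
Qed.

Lemma Qd_mulk d : forall f, Qd d f -> Qd (S d) (fun k => k * f k)%nat.
Proof.
  induction d as [|d IH]; intros f Hf.
  - simpl in Hf. destruct Hf as [c [Hc Hk]]. simpl. split.
    + intros k. rewrite !Hk. nia.
    + exists c. split; auto. intros k. rewrite !Hk. nia.
  - pose proof Hf as [Hm HQ]. split.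
    + intros k. specialize (Hm k). nia.
    + assert (E : forall k, (f (S k) + k * (f (S k) - f k) = S k * f (S k) - k * f k)%nat).
      { intros k. specialize (Hm k).
        destruct (Nat.le_exists_sub _ _ Hm) as [e [He _]]. rewrite He.
        replace (e + f k - f k)%nat with e by lia. nia. }
      apply (Qd_ext _ _ _ E). apply Qd_add.
      * apply Qd_shift; auto.
      * apply IH; auto.
Qed.

Lemma peval_cons c cs k : peval (c :: cs) k = (c + k * peval cs k)%nat.
Proof. reflexivity. Qed.

Lemma peval_R cs : (forall k, peval cs k = 0%nat) \/ exists d, Qd d (peval cs).
Proof.
  induction cs as [|c cs IH].
  - left. intros k. reflexivity.
  - destruct IH as [Z|[d Hd]].
    + destruct c as [|c].
      * left. intros k. rewrite peval_cons, Z. lia.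
      * right. exists O. exists (S c). split; [lia|]. intros k. rewrite peval_cons, Z. lia.
    + right. exists (S d). apply (Qd_ext _ (fun k => c + k * peval cs k)%nat).
      * intros k; rewrite peval_cons; auto.
      * apply Qd_addc, Qd_mulk; auto.
Qed.

Lemma peval_zero cs : (forall k, (1 <= k)%nat -> peval cs k = 0%nat) -> forall i, nth i cs 0%nat = 0%nat.
Proof.
  induction cs as [|c cs IH]; intros H i.
  - destruct i; reflexivity.
  - assert (Hc : c = 0%nat) by (specialize (H 1%nat (le_n 1)); rewrite peval_cons in H; lia).
    destruct i as [|i]; simpl; auto.
    apply IH. intros k Hk. specialize (H k Hk). rewrite peval_cons in H. nia.
Qed.

Theorem mainTheorem12 (cs : list nat) (Hnc : nonconstant cs) :
  ~ (exists (mu : (R -> Prop) -> R) (a b : nat -> R),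
       is_prob_measure_T mu /\ atomless mu /\
       (forall k, fourier_coeff mu (peval cs k) (a k) (b k)) /\
       Un_cv a 1 /\ Un_cv b 0).
Proof.
  intros [mu [a [b [Hmu [Hat [Hf [Ha Hb]]]]]]].
  assert (Hg : good mu (peval cs)).
  { intros eps He. destruct (Ha (eps / 2)) as [K HK]; [lra|].
    exists K. intros k Hk. specialize (HK k Hk). unfold R_dist in HK.
    destruct (Hf k) as [Hc _]. unfold integral_T in Hc.
    destruct (Hc (eps / 2)) as [N0 HN0]; [lra|].
    exists N0. intros N HN. specialize (HN0 N HN). unfold R_dist in HN0.
    rewrite Dn_eq, rs_one; auto.
    apply Rabs_def2 in HK. apply Rabs_def2 in HN0. lra. }
  destruct (peval_R cs) as [Z|[d Hd]].
  - destruct Hnc as [i [_ Hi]]. apply Hi. apply peval_zero. intros; apply Z.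
  - destruct (Qd_good mu Hmu d _ Hd Hg) as [c [Hc Hs]].
    apply (atom_contra mu Hmu Hat c Hc Hs).
Qed.
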